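(* The GreedyEJR-M rule is well-defined, always terminates, and for every instance returns a bundle $R'$ with $s(R')\le\alpha$ that satisfies EJR-M (and therefore EJR-1). In particular, an EJR-M allocation exists in every instance.
   Context: Model: There is a set of agents $N=\{1,\dots,n\}$. The resource $R$ consists of a cake $C=[0,c]$ for a real $c\ge 0$ and a set of indivisible goods $G=\{g_1,\dots,g_m\}$ for an integer $m\ge 0$, with $\max(c,m)>0$. A piece of cake is a union of finitely many disjoint closed subintervals of $C$; its length $\ell(\cdot)$ is the sum of the lengths of its intervals. A bundle $R'=(C',G')$ consists of a piece of cake $C'\subseteq C$ and a set $G'\subseteq G$; its size is $s(R')=\ell(C')+|G'|$. Each agent $i$ approves a bundle $R_i=(C_i,G_i)$, and her utility for a bundle $R'$ is $u_i(R')=\ell(C_i\cap C')+|G_i\cap G'|$. A parameter $\alpha\in(0,c+m]$ is given; an allocation is a bundle $A$ with $s(A)\le\alpha$. For a real $t\ge 0$, a group $N^*\subseteq N$ is $t$-cohesive if $|N^*|\ge t\cdot n/\alpha$ and $s(\bigcap_{i\in N^*}R_i)\ge t$. EJR-M: an allocation $A$ satisfies EJR-M if for every real $t>0$ and every $t$-cohesive group $N^*$ for which there exists a bundle $R^*\subseteq R$ with $s(R^* )=t$ and $R^*\subseteq R_i$ for all $i\in N^*$, there is $j\in N^*$ with $u_j(A)\ge t$. EJR-1: for every real $t>0$ and every $t$-cohesive $N^*$, some $j\in N^*$ has $u_j(A)>t-1$. GreedyEJR-M rule: Step 1: set $N'=N$, $R'=\emptyset$. Step 2: let $t^*$ be the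 largest nonnegative real for which there exist a nonempty $N^*\subseteq N'$ and a bundle $R^*\subseteq R$ such that $N^*$ is $t^*$-cohesive, $R^*\subseteq R_i$ for all $i\in N^*$, and $s(R^* )=t^*$; take any such pair $(N^*,R^* )$, remove $N^*$ from $N'$, and add to $R'$ the part of $R^*$ not already in $R'$. Step 3: if $N'=\emptyset$ return $R'$; otherwise go to Step 2. *)

(* Defs.v *)
From HB Require Import structures.
From mathcomp Require Import all_boot all_order all_algebra.
From mathcomp Require Import all_classical all_reals all_analysis.
Set Implicit Arguments. Unset Strict Implicit. Unset Printing Implicit Defensive.
Import Order.TTheory GRing.Theory Num.Theory.
Local Open Scope classical_set_scope.
Local Open Scope ring_scope.

Section Model.
Variable R : realType.
(* n agents 'I_n, m goods 'I_m, cake [0,c] *)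
Variables (n m : nat) (c alpha : R).

Definition cake : set R := [set x | 0 <= x <= c].

Definition is_piece (X : set R) : Prop :=
  exists s : seq (R * R),
    (forall p, p \in s -> 0 <= p.1 /\ p.1 <= p.2 /\ p.2 <= c) /\
    (forall i j, (i < j < size s)%N ->
       [set x | (nth (0,0) s i).1 <= x <= (nth (0,0) s i).2] `&`
       [set x | (nth (0,0) s j).1 <= x <= (nth (0,0) s j).2] = set0) /\
    X = [set x | exists2 p, p \in s & p.1 <= x <= p.2].

(* Length of a piece of cake: its Lebesgue measure (finite for pieces). *)
Definition len (X : set R) : R := fine (@lebesgue_measure R X).

Definition bundle := (set R * {set 'I_m})%type.

Definition is_bundle (B : bundle) : Prop := is_piece B.1.

Definition bsize (B : bundle) : R := len B.1 + (#|B.2|)%:R.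

Definition bsub (B B' : bundle) : Prop := B.1 `<=` B'.1 /\ B.2 \subset B'.2.

Definition bunion (B B' : bundle) : bundle := (B.1 `|` B'.1, B.2 :|: B'.2).

Variable A : 'I_n -> bundle. (* approved bundles R_i = (C_i, G_i) *)

Definition util (i : 'I_n) (B : bundle) : R :=
  len ((A i).1 `&` B.1) + (#|(A i).2 :&: B.2|)%:R.

Definition common (S : {set 'I_n}) : bundle :=
  (cake `&` [set x | forall i, i \in S -> (A i).1 x],
   [set g : 'I_m | [forall i in S, g \in (A i).2]]%SET).

Definition cohesive (t : R) (S : {set 'I_n}) : Prop :=
  t * n%:R / alpha <= (#|S|)%:R /\ t <= bsize (common S).

Definition allocation (B : bundle) : Prop := is_bundle B /\ bsize B <= alpha.

Definition witness (t : R) (S : {set 'I_n}) (B : bundle) : Prop :=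
  is_bundle B /\ (forall i, i \in S -> bsub B (A i)) /\ bsize B = t.

Definition EJR_M (W : bundle) : Prop :=
  forall (t : R) (S : {set 'I_n}), 0 < t -> cohesive t S ->
    (exists B, witness t S B) ->
    exists2 j, j \in S & t <= util j W.

Definition EJR_1 (W : bundle) : Prop :=
  forall (t : R) (S : {set 'I_n}), 0 < t -> cohesive t S ->
    exists2 j, j \in S & t - 1 < util j W.

Definition feasible (N' : {set 'I_n}) (t : R) (S : {set 'I_n}) (B : bundle)
  : Prop :=
  0 <= t /\ S \subset N' /\ S != finset.set0 /\ cohesive t S /\ witness t S B.

(* states of the rule: (remaining agents N', current bundle R') *)
Definition state := ({set 'I_n} * bundle)%type.

Definition greedy_step (st st' : state) : Prop :=
  exists t S B,
    feasible st.1 t S B /\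
    (forall t' S' B', feasible st.1 t' S' B' -> t' <= t) /\
    st' = (st.1 :\: S, bunion st.2 B).

Definition init_state : state := (finset.setT, (set0, finset.set0)).

Inductive steps : nat -> state -> Prop :=
| steps0 : steps 0 init_state
| stepsS k st st' : steps k st -> greedy_step st st' -> steps k.+1 st'.

End Model.

(* Main.v *)
Require Import Defs.
From HB Require Import structures.
From mathcomp Require Import all_boot all_order all_algebra.
From mathcomp Require Import all_classical all_reals all_analysis.
From mathcomp Require Import lra.
Import Order.TTheory GRing.Theory Num.Theory.
Local Open Scope classical_set_scope.
Local Open Scope ring_scope.
From mathcomp Require Import zify.
Definition U {R : realType} (s : seq (R * R)) : set R :=
  [set x | exists2 p, p \in s & p.1 <= x <= p.2].

Definition validp {R : realType} (c : R) (p : R * R) : bool :=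
  [&& 0 <= p.1, p.1 <= p.2 & p.2 <= c].

Definition disj {R : realType} (p q : R * R) : bool := (p.2 < q.1) || (q.2 < p.1).

Lemma U_nil {R : realType} : U (R:=R) [::] = set0.
Proof. by apply/seteqP; split => x //= [p]. Qed.

Lemma U_cons {R : realType} (p : R * R) s :
  U (p :: s) = [set x | p.1 <= x <= p.2] `|` U s.
Proof.
apply/seteqP; split => x /=.
- case=> q; rewrite inE => /orP[/eqP->|qs] hq; [by left| by right; exists q].
- case=> [hp|[q qs hq]]; [exists p => //; exact: mem_head|exists q => //].
  by rewrite inE qs orbT.
Qed.

Lemma U_cat {R : realType} (s1 s2 : seq (R * R)) : U (s1 ++ s2) = U s1 `|` U s2.
Proof.
apply/seteqP; split => x /=.
- by case=> q; rewrite mem_cat => /orP[] qs hq; [left|right]; exists q.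
- by case=> -[q qs hq]; exists q => //; rewrite mem_cat qs ?orbT.
Qed.

Lemma hull2 {R : realType} (a b a' b' x : R) :
  a <= b -> a' <= b -> a <= b' ->
  (Num.min a a' <= x <= Num.max b b') = (a <= x <= b) || (a' <= x <= b').
Proof.
move=> h1 h2 h3.
rewrite ge_min le_max.
case: (lerP a x) => ax; case: (lerP a' x) => a'x; case: (lerP x b) => xb;
  case: (lerP x b') => xb'; rewrite /= ?orbT ?orbF ?andbT ?andbF //=; lra.
Qed.

Definition hullL {R : realType} (L : seq (R * R)) (a b : R) : R * R :=
  foldr (fun p acc => (Num.min acc.1 p.1, Num.max acc.2 p.2)) (a, b) L.

Lemma hullL_spec {R : realType} (L : seq (R * R)) (a b : R) :
  a <= b -> (forall p, p \in L -> [/\ p.1 <= p.2, p.1 <= b & a <= p.2]) ->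
  [/\ (hullL L a b).1 <= a, b <= (hullL L a b).2 &
   forall x, ((hullL L a b).1 <= x <= (hullL L a b).2) <-> (a <= x <= b \/ U L x)].
Proof.
move=> ab; elim: L => [|p L IH] HL /=.
  split; rewrite ?lexx // => x; split; [by left|by case=> // -[]].
have [h1 h2 h3] := IH (fun q qL => HL q (mem_behead (s:=p :: L) qL)).
have [p1 p2 p3] := HL p (mem_head _ _).
split.
- by rewrite ge_min h1.
- by rewrite le_max h2.
- move=> x; rewrite hull2; [|lra|lra|lra].
  rewrite U_cons /=; split.
  + case/orP => [/h3 [H|H]|H]; [by left| by right; right| by right; left].
  + case=> [H|[H|H]]; apply/orP; [left; apply/h3; by left|by right|left; apply/h3; by right].
Qed.

Lemma hullL_valid {R : realType} (c : R) (L : seq (R * R)) (a b : R) :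
  validp c (a, b) -> all (validp c) L ->
  validp c (hullL L a b).
Proof.
move=> hab; elim: L => [|p L IH] //= /andP[hp hL].
move: (IH hL) hp; rewrite /validp /= => /and3P[q1 q2 q3] /and3P[r1 r2 r3].
apply/and3P; split.
- by rewrite le_min q1 r1.
- by rewrite ge_min le_max q2.
- by rewrite ge_max q3 r3.
Qed.

Lemma hullL_lo {R : realType} (L : seq (R * R)) (a b y : R) :
  y < a -> (forall p, p \in L -> y < p.1) -> y < (hullL L a b).1.
Proof.
move=> ya; elim: L => [|p L IH] HL //=.
by rewrite lt_min IH ?HL ?mem_head // => q qL; apply: HL; rewrite inE qL orbT.
Qed.

Lemma hullL_hi {R : realType} (L : seq (R * R)) (a b y : R) :
  b < y -> (forall p, p \in L -> p.2 < y) -> (hullL L a b).2 < y.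
Proof.
move=> ya; elim: L => [|p L IH] HL //=.
by rewrite gt_max IH ?HL ?mem_head // => q qL; apply: HL; rewrite inE qL orbT.
Qed.

Definition Dsj {R : realType} (s : seq (R * R)) : Prop :=
  forall p q, p \in s -> q \in s -> p != q -> disj p q.

Lemma disjC {R : realType} (p q : R * R) : disj p q = disj q p.
Proof. by rewrite /disj orbC. Qed.

Definition ins {R : realType} (ab : R * R) (D : seq (R * R)) : seq (R * R) :=
  [seq p <- D | disj ab p] ++
  [:: hullL [seq p <- D | ~~ disj ab p] ab.1 ab.2].

Lemma ins_spec {R : realType} (c : R) (ab : R * R) (D : seq (R * R)) :
  validp c ab -> all (validp c) D -> uniq D -> Dsj D ->
  [/\ all (validp c) (ins ab D), uniq (ins ab D), Dsj (ins ab D) &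
      U (ins ab D) = [set x | ab.1 <= x <= ab.2] `|` U D].
Proof.
case: ab => a b /= hab hD uD dD.
set F := [seq p <- D | disj (a, b) p].
set G := [seq p <- D | ~~ disj (a, b) p].
set h := hullL G a b.
have vab := hab; move: hab; rewrite /validp /= => /and3P[a0 ab bc].
have HG : forall p, p \in G -> [/\ p.1 <= p.2, p.1 <= b & a <= p.2].
  move=> p; rewrite mem_filter /disj /= negb_or -!leNgt => /andP[/andP[h1 h2] pD].
  by move/allP: hD => /(_ p pD) /and3P[].
have [h1 h2 h3] := @hullL_spec _ G a b ab HG.
have hv : validp c h by apply: hullL_valid => //; apply/allP => p; rewrite mem_filter => /andP[_ pD]; exact: (allP hD).
have hdisjF : forall J, J \in F -> disj J h.
  move=> J; rewrite mem_filter => /andP[dJ JD].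
  have vJ : validp c J by move/allP: hD => /(_ J JD).
  move: vJ; rewrite /validp => /and3P[_ J12 _].
  have HJ : forall p, p \in G -> disj J p.
    move=> p pG; have := pG; rewrite mem_filter => /andP[ndp pD].
    apply: dD => //; apply/negP => /eqP eJp; move: ndp; by rewrite -eJp dJ.
  move: dJ; rewrite /disj /= => /orP[bJ|Ja].
  + apply/orP; right; apply: hullL_hi => // p pG.
    have [q1 q2 q3] := HG p pG; move: (HJ p pG); rewrite /disj => /orP[|] //.
    move=> H; exfalso; lra.
  + apply/orP; left; apply: hullL_lo => // p pG.
    have [q1 q2 q3] := HG p pG; move: (HJ p pG); rewrite /disj => /orP[|] //.
    move=> H; exfalso; lra.
have hh : ~~ disj h h by move: hv; rewrite /validp /disj => /and3P[_ ? _]; rewrite negb_or -!leNgt andbb.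
split.
- rewrite /ins -/F -/G -/h all_cat; apply/andP; split; last by rewrite /= andbT. apply/allP => p; rewrite mem_filter => /andP[_ pD]; exact: (allP hD).
- rewrite /ins -/F -/G -/h cat_uniq filter_uniq //= andbT orbF.
  apply/negP => hF; move: (hdisjF h hF); by rewrite (negbTE hh).
- move=> p q; rewrite /ins -/F -/G -/h !mem_cat !inE => /orP[pF|/eqP->] /orP[qF|/eqP->] pq.
  + by move: pF qF; rewrite !mem_filter => /andP[_ pD] /andP[_ qD]; apply: dD.
  + exact: hdisjF.
  + by rewrite disjC; apply: hdisjF.
  + by rewrite eqxx in pq.
- rewrite /ins -/F -/G -/h U_cat U_cons U_nil setU0.
  apply/seteqP; split => x /=.
  + case=> [[p pF hp]|/h3 [H|[p pG hp]]]; [right|by left|right].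
    * by exists p => //; move: pF; rewrite mem_filter => /andP[].
    * by exists p => //; move: pG; rewrite mem_filter => /andP[].
  + case=> [H|[p pD hp]]; first by right; apply/h3; left.
    case dp: (disj (a, b) p).
    * by left; exists p => //; rewrite mem_filter dp.
    * by right; apply/h3; right; exists p => //; rewrite mem_filter dp.
Qed.

Definition norm {R : realType} (s : seq (R * R)) : seq (R * R) := foldr ins [::] s.

Lemma norm_spec {R : realType} (c : R) (s : seq (R * R)) :
  all (validp c) s ->
  [/\ all (validp c) (norm s), uniq (norm s), Dsj (norm s) & U (norm s) = U s].
Proof.
elim: s => [|p s IH] /=; first by split => // p q.
move=> /andP[vp vs]; have [v u d e] := IH vs.
have [v' u' d' e'] := @ins_spec _ c p (norm s) vp v u d.
by split => //; rewrite e' e U_cons.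
Qed.

Lemma set_itv {R : realType} (a b : R) : [set x | a <= x <= b] = [set` `[a, b]].
Proof. by apply/seteqP; split => x /=; rewrite in_itv. Qed.

Lemma leb_itv {R : realType} (a b : R) : a <= b ->
  lebesgue_measure [set x | a <= x <= b] = (b - a)%:E.
Proof.
move=> ab; rewrite set_itv lebesgue_measure_itv /= lte_fin.
case: ltP => h; first by rewrite -EFinB.
have -> : b = a by apply/le_anti; rewrite ab h.
by rewrite subrr.
Qed.

Lemma meas_itv {R : realType} (a b : R) : measurable [set x : R | a <= x <= b].
Proof. rewrite set_itv; exact: measurable_itv. Qed.

Lemma meas_U {R : realType} (s : seq (R * R)) : measurable (U s).
Proof.
elim: s => [|p s IH]; first by rewrite U_nil.
rewrite U_cons; apply: measurableU => //; exact: meas_itv.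
Qed.

Definition box {R : realType} (c : R) : set R := [set x | 0 <= x <= c].

Lemma U_sub {R : realType} (c : R) (s : seq (R * R)) :
  all (validp c) s -> U s `<=` box c.
Proof.
move=> /allP hs x [p /hs]; rewrite /validp /box /= => /and3P[h1 h2 h3] /andP[h4 h5].
apply/andP; split; lra.
Qed.

Lemma lfin {R : realType} (c : R) (X : set R) : 0 <= c -> measurable X -> X `<=` box c ->
  lebesgue_measure X = (len X)%:E.
Proof.
move=> c0 mX Xc; rewrite /len fineK // ge0_fin_numE ?measure_ge0 //.
apply: (le_lt_trans (y := lebesgue_measure (box c))).
  by apply: le_measure => //; rewrite inE //; exact: meas_itv.
by rewrite /box leb_itv // ltry.
Qed.

Lemma len_ge0 {R : realType} (X : set R) : 0 <= len X.
Proof. by rewrite /len fine_ge0 // measure_ge0. Qed.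

Lemma len_itv {R : realType} (a b : R) : a <= b -> len [set x | a <= x <= b] = b - a.
Proof. by move=> ab; rewrite /len leb_itv. Qed.

Lemma len0 {R : realType} : len (R:=R) set0 = 0.
Proof. by rewrite /len measure0. Qed.

Lemma len_le {R : realType} (c : R) (X Y : set R) : 0 <= c -> measurable X -> measurable Y ->
  Y `<=` box c -> X `<=` Y -> len X <= len Y.
Proof.
move=> c0 mX mY Yc XY.
have Xc : X `<=` box c by move=> x /XY /Yc.
rewrite -lee_fin -(lfin _ _ c0 mX Xc) -(lfin _ _ c0 mY Yc).
by apply: le_measure => //; rewrite inE.
Qed.

Lemma len_U2 {R : realType} (c : R) (X Y : set R) : 0 <= c -> measurable X -> measurable Y ->
  X `<=` box c -> Y `<=` box c -> len (X `|` Y) <= len X + len Y.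
Proof.
move=> c0 mX mY Xc Yc.
have XYc : X `|` Y `<=` box c by move=> x [/Xc|/Yc].
have mXY : measurable (X `|` Y) by exact: measurableU.
rewrite -lee_fin EFinD -(lfin _ _ c0 mX Xc) -(lfin _ _ c0 mY Yc) -(lfin _ _ c0 mXY XYc).
exact: measureU2.
Qed.

Lemma len_add {R : realType} (c : R) (X Y : set R) : 0 <= c -> measurable X -> measurable Y ->
  X `<=` box c -> Y `<=` box c -> X `&` Y = set0 -> len (X `|` Y) = len X + len Y.
Proof.
move=> c0 mX mY Xc Yc XY0.
have XYc : X `|` Y `<=` box c by move=> x [/Xc|/Yc].
have mXY : measurable (X `|` Y) by exact: measurableU.
apply: EFin_inj.
rewrite EFinD -(lfin _ _ c0 mX Xc) -(lfin _ _ c0 mY Yc) -(lfin _ _ c0 mXY XYc).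
exact: measureU.
Qed.
Arguments lfin {R c X}.
Arguments len_le {R c X Y}.
Arguments len_U2 {R c X Y}.
Arguments len_add {R c X Y}.
Arguments U_sub {R c s}.

Definition Pw {R : realType} (s : seq (R * R)) : Prop :=
  forall i j, (i < j < size s)%N -> disj (nth (0,0) s i) (nth (0,0) s j).

Lemma disj_sets {R : realType} (p q : R * R) : disj p q ->
  [set x | p.1 <= x <= p.2] `&` [set x | q.1 <= x <= q.2] = set0.
Proof.
move=> d; apply/seteqP; split => x //= [/andP[h1 h2] /andP[h3 h4]].
move: d; rewrite /disj => /orP[] H; lra.
Qed.

Lemma sets_disj {R : realType} (p q : R * R) : p.1 <= p.2 -> q.1 <= q.2 ->
  [set x | p.1 <= x <= p.2] `&` [set x | q.1 <= x <= q.2] = set0 -> disj p q.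
Proof.
move=> hp hq H; rewrite /disj; case: ltP => //= h1; case: ltP => //= h2.
have : ([set x | p.1 <= x <= p.2] `&` [set x | q.1 <= x <= q.2]) (Num.max p.1 q.1).
  split => /=; apply/andP; split; rewrite ?le_max ?ge_max ?lexx ?orbT //; apply/andP; split; lra.
by rewrite H.
Qed.

Lemma piece_of_list {R : realType} (c : R) (s : seq (R * R)) :
  all (validp c) s -> is_piece c (U s).
Proof.
move=> vs; have [v u d e] := norm_spec c s vs.
exists (norm s); split; last (split; last (by rewrite -[RHS]/(U (norm s)) e)).
- by move=> p /(allP v); rewrite /validp => /and3P[? ? ?].
- move=> i j /andP[ij js]; apply: disj_sets; apply: d.
  + by apply: mem_nth; apply: ltn_trans js.
  + exact: mem_nth.
  + rewrite nth_uniq //; [by rewrite neq_ltn ij| exact: ltn_trans js].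
Qed.

Lemma piece_inv {R : realType} (c : R) (X : set R) : is_piece c X ->
  exists s, [/\ all (validp c) s, Pw s & X = U s].
Proof.
case=> s [hv [hd ->]]; exists s; split => //.
- by apply/allP => p /hv [h1 [h2 h3]]; rewrite /validp h1 h2 h3.
- move=> i j /andP[ij js]; have is' : (i < size s)%N by apply: ltn_trans js.
  apply: sets_disj; last by apply: hd; rewrite ij js.
  + by have [_ [? _]] := hv _ (mem_nth (0,0) is').
  + by have [_ [? _]] := hv _ (mem_nth (0,0) js).
Qed.

Lemma Pw_cons {R : realType} (p : R * R) s : Pw (p :: s) -> Pw s /\ forall q, q \in s -> disj p q.
Proof.
move=> H; split.
- by move=> i j ij; apply: (H i.+1 j.+1).
- move=> q qs; have := H 0%N (index q s).+1; rewrite /= nth_index //; apply.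
  by rewrite ltnS index_mem.
Qed.

Lemma disj_U {R : realType} (p : R * R) s : (forall q, q \in s -> disj p q) ->
  [set x | p.1 <= x <= p.2] `&` U s = set0.
Proof.
move=> H; apply/seteqP; split => x //= [hx [q qs hq]].
have := @disj_sets _ p q (H q qs); move/seteqP => [/(_ x) h _]; exact: h.
Qed.

Arguments disj_U {R p s}.

Lemma piece_meas {R : realType} (c : R) X : is_piece c X -> measurable X /\ X `<=` box c.
Proof. by case/piece_inv => s [v _ ->]; split; [exact: meas_U| exact: U_sub]. Qed.

Lemma subpiece {R : realType} (c : R) (s : seq (R * R)) : 0 <= c ->
  all (validp c) s -> Pw s -> forall l, 0 <= l <= len (U s) ->
  exists s', [/\ all (validp c) s', U s' `<=` U s & len (U s') = l].
Proof.
move=> c0; elim: s => [|p s IH] /=.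
  move=> _ _ l; rewrite U_nil len0 => hl.
  have -> : l = 0 by apply/le_anti; rewrite andbC.
  by exists [::]; split; rewrite ?U_nil ?len0.
move=> /andP[vp vs] /Pw_cons [pw dp] l.
have vp' := vp; move: vp'; rewrite /validp => /and3P[p1 p2 p3].
have sub := U_sub vs.
have psub : [set x | p.1 <= x <= p.2] `<=` box c.
  by move=> x /= /andP[h1 h2]; rewrite /box /=; apply/andP; split; lra.
rewrite U_cons (len_add c0 (meas_itv _ _) (meas_U _) psub sub (disj_U dp)) len_itv //.
move=> /andP[l0 hl].
case: (lerP l (p.2 - p.1)) => hlp.
  exists [:: (p.1, p.1 + l)]; split.
  - by rewrite /= andbT /validp /= p1 /=; apply/andP; split; lra.
  - by rewrite U_cons U_nil setU0 => x /= /andP[h1 h2]; left; apply/andP; split; lra.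
  - by rewrite U_cons U_nil setU0 len_itv /=; lra.
have [s' [v' s's e']] := IH vs pw (l - (p.2 - p.1)) ltac:(apply/andP; split; lra).
exists (p :: s'); split.
- by apply/andP; split.
- by rewrite !U_cons => x [H|/s's H]; [left|right].
- have dj : [set x | p.1 <= x <= p.2] `&` U s' = set0.
    by apply/seteqP; split => x //= [h1 /s's h2]; have := disj_U dp; move/seteqP=> [/(_ x) H _]; apply: H; split.
  rewrite U_cons (len_add c0 (meas_itv _ _) (meas_U _) psub (fun x h => sub x (s's x h)) dj).
  by rewrite len_itv // e'; lra.
Qed.

Definition interl {R : realType} (s1 s2 : seq (R * R)) : seq (R * R) :=
  [seq r <- [seq (Num.max p.1 q.1, Num.min p.2 q.2) | p <- s1, q <- s2] | r.1 <= r.2].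

Lemma interl_spec {R : realType} (c : R) s1 s2 :
  all (validp c) s1 -> all (validp c) s2 ->
  all (validp c) (interl s1 s2) /\ U (interl s1 s2) = U s1 `&` U s2.
Proof.
move=> v1 v2; split.
- apply/allP => r; rewrite mem_filter => /andP[r12 /allpairsP [[p q] [ps qs E]]]; subst r.
  move: (allP v1 p ps) (allP v2 q qs) r12; rewrite /validp /= => /and3P[a1 a2 a3] /and3P[b1 b2 b3] r12.
  apply/and3P; split => //.
  + by rewrite le_max a1.
  + by rewrite ge_min a3.
- apply/seteqP; split => x /=.
  + case=> r; rewrite mem_filter => /andP[r12 /allpairsP [[p q] [ps qs ->]]] /=.
    rewrite ge_max le_min => /andP[/andP[h1 h2] /andP[h3 h4]].
    by split; [exists p => //; rewrite h1 h3| exists q => //; rewrite h2 h4].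
  + case=> -[p ps /andP[h1 h2]] [q qs /andP[h3 h4]].
    exists (Num.max p.1 q.1, Num.min p.2 q.2); last by rewrite /= ge_max le_min h1 h2 h3 h4.
    rewrite mem_filter /= ge_max !le_min; apply/andP; split.
      by apply/andP; split; apply/andP; split; lra.
    by apply/allpairsP; exists (p, q).
Qed.

Lemma piece_inter {R : realType} (c : R) X Y : is_piece c X -> is_piece c Y -> is_piece c (X `&` Y).
Proof.
case/piece_inv => s1 [v1 _ ->]; case/piece_inv => s2 [v2 _ ->].
have [v e] := interl_spec c s1 s2 v1 v2; rewrite -e; exact: piece_of_list.
Qed.

Lemma piece_union {R : realType} (c : R) X Y : is_piece c X -> is_piece c Y -> is_piece c (X `|` Y).
Proof.
case/piece_inv => s1 [v1 _ ->]; case/piece_inv => s2 [v2 _ ->].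
rewrite -U_cat; apply: piece_of_list; by rewrite all_cat v1 v2.
Qed.

Lemma piece_box {R : realType} (c : R) : 0 <= c -> is_piece c (box c).
Proof.
move=> c0; have -> : box c = U [:: (0, c)] by rewrite U_cons U_nil setU0.
apply: piece_of_list => /=; by rewrite andbT /validp /= lexx c0 /= lexx.
Qed.

Lemma piece0 {R : realType} (c : R) : is_piece c set0.
Proof. by rewrite -U_nil; apply: piece_of_list. Qed.

Lemma piece_common {R : realType} (c : R) (T : eqType) (F : T -> set R) (l : seq T) :
  0 <= c -> (forall i, is_piece c (F i)) ->
  is_piece c (box c `&` [set x | forall i, i \in l -> F i x]).
Proof.
move=> c0 hF; elim: l => [|a l IH].
  have -> : box c `&` [set x | forall i, i \in [::] -> F i x] = box c.
    by apply/seteqP; split => x /=; [case|move=> h; split].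
  exact: piece_box.
have -> : box c `&` [set x | forall i, i \in a :: l -> F i x] =
   F a `&` (box c `&` [set x | forall i, i \in l -> F i x]).
  apply/seteqP; split => x /=.
  - case=> hb H; split; [apply: H; exact: mem_head|split=> // i il; apply: H; by rewrite inE il orbT].
  - case=> Fa [hb H]; split=> // i; rewrite inE => /orP[/eqP->//|]; exact: H.
exact: piece_inter.
Qed.
Arguments piece_meas {R c X}.
Arguments piece_inv {R c X}.
Arguments piece_of_list {R c s}.
Arguments subpiece {R c s}.
Arguments piece_union {R c X Y}.
Arguments piece_inter {R c X Y}.

Lemma card_sub (T : finType) (G : {set T}) (k : nat) :
  (k <= #|G|)%N -> exists H : {set T}, H \subset G /\ #|H| = k.
Proof.
elim: k => [|k IH] hk; first by exists finset.set0; split; [apply/fintype.subsetP => ?; rewrite inE|rewrite cards0].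
have [H [HG cH]] := IH (ltnW hk).
have : ~~ (G \subset H).
  apply/negP => GH; have := subset_leq_card GH; rewrite cH; lia.
case/subsetPn => x xG xH.
exists (x |: H); split.
- by rewrite finset.subUset finset.sub1set xG HG.
- by rewrite cardsU1 xH cH.
Qed.

Section Main.
Variables (R : realType) (n m : nat) (c alpha : R) (A : 'I_n -> bundle R m).
Hypotheses (hn : (0 < n)%N) (hc : 0 <= c) (ha : 0 < alpha)
  (hA : forall i, is_bundle c (A i)).

Lemma common_piece S : is_piece c (common c A S).1.
Proof.
rewrite /common /=.
have -> : [set x | forall i, i \in S -> (A i).1 x] =
          [set x | forall i, i \in enum S -> (A i).1 x].
  by apply/seteqP; split => x /= H i; rewrite ?mem_enum; [exact: H|move=> iS; apply: H; rewrite mem_enum].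
exact: (@piece_common R c _ (fun i => (A i).1) (enum S) hc hA).
Qed.

Lemma witness_sub t S B : witness c A t S B ->
  B.1 `<=` (common c A S).1 /\ B.2 \subset (common c A S).2.
Proof.
case=> hB [hsub _]; split.
- move=> x Bx; split; first by have [_ /(_ x Bx)] := piece_meas hB.
  by move=> i iS; have [/(_ x Bx) ? _] := hsub i iS.
- apply/fintype.subsetP => g gB; rewrite inE; apply/forallP => i; apply/implyP => iS.
  by have [_ /fintype.subsetP /(_ g gB)] := hsub i iS.
Qed.

Lemma util_ge0 j W : 0 <= util A j W.
Proof. by rewrite /util addr_ge0 ?len_ge0. Qed.

Lemma bsize_ge0 (B : bundle R m) : 0 <= bsize B.
Proof. by rewrite /bsize addr_ge0 ?len_ge0. Qed.

Lemma best S T : 0 <= T -> exists (t : R) B,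
  [/\ witness c A t S B, t <= T, t <= bsize (common c A S),
      (forall t' B', witness c A t' S B' -> t' <= T -> t' <= t) &
      (T <= bsize (common c A S) -> T - 1 < t)].
Proof.
move=> T0.
set P := (common c A S).1; set G := (common c A S).2.
have Pp : is_piece c P by exact: common_piece.
have [s [vs pws Ps]] := piece_inv Pp.
have [mP Pbox] := piece_meas Pp.
set L := len P.
have L0 : 0 <= L by exact: len_ge0.
set k := minn #|G| (Num.trunc T).
have kT : k%:R <= T.
  apply: (@le_trans _ _ (Num.trunc T)%:R); last by rewrite truncn_le.
  by rewrite ler_nat geq_minr.
set t := Num.min T (k%:R + L).
have tT : t <= T by rewrite ge_min lexx.
have tkL : t <= k%:R + L by rewrite ge_min lexx orbT.
have [s' [vs' s's e']] : exists s', [/\ all (validp c) s', U s' `<=` U s & len (U s') = t - k%:R].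
  apply: subpiece => //; rewrite -Ps -/L; apply/andP; split.
  - rewrite subr_ge0 le_min kT /=; lra.
  - lra.
have kG : (k <= #|G|)%N by rewrite /k geq_minl.
have [H [HG cH]] := @card_sub _ G k kG.
have wit : witness c A t S (U s', H).
  split; first exact: piece_of_list.
  split.
  - move=> i iS; split.
    + move=> x /s's; rewrite -Ps => -[_ /(_ i iS)]; done.
    + apply: fintype.subset_trans HG _; apply/fintype.subsetP => g; rewrite inE => /forallP /(_ i) /implyP; exact.
  - by rewrite /bsize /= e' cH; lra.
exists t, (U s', H); split => //.
- rewrite /bsize -/L (le_trans tkL) // addrC lerD2l ler_nat -/G; exact: kG.
- move=> t' B' hw t'T.
  have [s1 s2] := @witness_sub t' S B' hw.
  case: hw => hB' [_ et'].
  have [mB' _] := piece_meas hB'.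
  have lB : len B'.1 <= L by apply: (len_le hc mB' mP Pbox s1).
  have kk : (#|B'.2| <= k)%N.
    rewrite leq_min (subset_leq_card s2) /= truncn_ge_nat //.
    apply: le_trans t'T; rewrite -et' /bsize lerDr; exact: len_ge0.
  rewrite le_min t'T /= -et' /bsize addrC; apply: lerD => //; by rewrite ler_nat.
- move=> TL; rewrite lt_min; apply/andP; split; first lra.
  rewrite /k; case: (leqP #|G| (Num.trunc T)) => hg.
  + move: TL; rewrite /bsize -/L -/G; lra.
  + have := truncnS_gt T; rewrite -natr1; lra.
Qed.

Lemma coh_iff (t s : R) : (t * n%:R / alpha <= s) = (t <= s * alpha / n%:R).
Proof.
have n0 : 0 < n%:R :> R by rewrite ltr0n.
by rewrite ler_pdivrMr // ler_pdivlMr // mulrC.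
Qed.

Lemma util_witness (j : 'I_n) (t : R) (S : {set 'I_n}) (B : bundle R m) : j \in S -> witness c A t S B -> util A j B = t.
Proof.
move=> jS [hB [hs et]]; have [h1 h2] := hs j jS.
rewrite /util -et /bsize.
have -> : (A j).1 `&` B.1 = B.1 by apply/setIidPr.
by have -> : (A j).2 :&: B.2 = B.2 by apply/finset.setIidPr.
Qed.

Lemma util_mono (j : 'I_n) (W B : bundle R m) : is_piece c W.1 -> is_piece c B.1 ->
  util A j W <= util A j (bunion W B) /\ util A j B <= util A j (bunion W B).
Proof.
move=> pW pB.
have [mW _] := piece_meas pW; have [mB _] := piece_meas pB.
have [mA Abox] := piece_meas (hA j).
have mU : measurable (W.1 `|` B.1) by exact: measurableU.
have mAU : measurable ((A j).1 `&` (W.1 `|` B.1)) by exact: measurableI.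
have AUbox : (A j).1 `&` (W.1 `|` B.1) `<=` box c by move=> x [/Abox].
rewrite /util /bunion /=; split; apply: lerD.
- apply: (len_le hc _ mAU AUbox); first exact: measurableI.
  by apply: setIS => x; left.
- by rewrite ler_nat; apply: subset_leq_card; apply: finset.setIS; apply: finset.subsetUl.
- apply: (len_le hc _ mAU AUbox); first exact: measurableI.
  by apply: setIS => x; right.
- by rewrite ler_nat; apply: subset_leq_card; apply: finset.setIS; apply: finset.subsetUr.
Qed.

Lemma bsize_union (W B : bundle R m) : is_piece c W.1 -> is_piece c B.1 ->
  bsize (bunion W B) <= bsize W + bsize B.
Proof.
move=> pW pB.
have [mW Wb] := piece_meas pW; have [mB Bb] := piece_meas pB.
rewrite /bsize /bunion /= addrACA; apply: lerD; first exact: (len_U2 hc mW mB Wb Bb).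
rewrite -natrD ler_nat; exact: (leq_card_setU W.2 B.2).1.
Qed.

Definition EJRinv (st : state R n m) : Prop :=
  forall t S, 0 < t -> cohesive c alpha A t S -> (exists B, witness c A t S B) ->
    ~~ (S \subset st.1) -> exists2 j, j \in S & t <= util A j st.2.

Definition Inv (k : nat) (st : state R n m) : Prop :=
  [/\ (k + #|st.1| <= n)%N, is_piece c st.2.1,
      bsize st.2 * n%:R <= alpha * (n - #|st.1|)%:R & EJRinv st].

Lemma Inv0 : Inv 0 (init_state R n m).
Proof.
split => /=.
- by rewrite cardsT card_ord.
- exact: piece0.
- by rewrite /bsize /= len0 cards0 add0r mul0r mulr_ge0 // ltW.
- by move=> t S _ _ _; rewrite finset.subsetT.
Qed.

Lemma Inv_step k st st' : Inv k st -> greedy_step c alpha A st st' -> Inv k.+1 st'.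
Proof.
case: st => N W [hk pW hs hE] [t [S [B [[t0 [SN [Sne [[coh1 coh2] wit]]]] [hmax ->]]]]] /=.
cbn [fst snd] in *.
have pB : is_piece c B.1 by case: wit.
have cS : (0 < #|S|)%N by rewrite card_gt0.
have cSN : (#|S| <= #|N|)%N by apply: subset_leq_card.
have cD : #|N :\: S| = (#|N| - #|S|)%N.
  by rewrite cardsD (elimT finset.setIidPr SN).
have nN : (#|N| <= n)%N by move: hk => /=; lia.
split => /=.
- rewrite cD; move: hk cS cSN => /=; set a := #|N|; set b := #|S|; lia.
- exact: piece_union.
- have h1 := @bsize_union W B pW pB.
  have h2 : t * n%:R <= #|S|%:R * alpha.
    by move: coh1; rewrite ler_pdivrMr.
  have e : (n - #|N :\: S|)%:R = (n - #|N|)%:R + #|S|%:R :> R.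
    by rewrite cD -natrD; congr (_%:R); lia.
  have eB : bsize B = t by case: wit => _ [].
  rewrite e mulrDr.
  apply: (@le_trans _ _ ((bsize W + bsize B) * n%:R)).
    by apply: ler_wpM2r => //; rewrite ler0n.
  by rewrite mulrDl eB; apply: lerD => //; rewrite [alpha * _]mulrC.
- move=> t1 S1 t10 coh wB nsub.
  case: (boolP (S1 \subset N)) => S1N; last first.
    have [j jS1 hj] := hE t1 S1 t10 coh wB S1N.
    exists j => //; apply: le_trans hj _; exact: (@util_mono j W B pW pB).1.
  have [j jS1 jn] := subsetPn nsub.
  have jS : j \in S.
    move: jn; rewrite inE negb_and negbK => /orP[//|]; by rewrite (fintype.subsetP S1N j jS1).
  have [B1 w1] := wB.
  have tt : t1 <= t.
    apply: (hmax t1 S1 B1); split; first exact: ltW.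
    split=> //; split; first by apply/set0Pn; exists j.
    by split.
  exists j => //; apply: le_trans tt _.
  rewrite -(@util_witness j t S B jS wit); exact: (@util_mono j W B pW pB).2.
Qed.

Lemma Inv_steps k st : steps c alpha A k st -> Inv k st.
Proof.
elim => [|k0 s s' _ IH hst]; first exact: Inv0.
exact: Inv_step IH hst.
Qed.


Lemma seq_max (T : eqType) (l : seq T) (g : T -> R) x0 : x0 \in l ->
  exists2 x, x \in l & forall y, y \in l -> g y <= g x.
Proof.
elim: l x0 => [|a l IH] x0 //; rewrite inE => /orP[/eqP e|xl].
  case: l IH => [|b l] IH.
    by exists a; [exact: mem_head|move=> y; rewrite inE => /eqP->].
  have [x xl hx] := IH b (mem_head _ _).
  case: (lerP (g a) (g x)) => h.
  - exists x; first by rewrite inE xl orbT.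
    by move=> y; rewrite inE => /orP[/eqP->|/hx].
  - exists a; first exact: mem_head.
    move=> y; rewrite inE => /orP[/eqP->//|/hx H]; exact: (le_trans H (ltW h)).
have [x xl2 hx] := IH x0 xl.
case: (lerP (g a) (g x)) => h.
- exists x; first by rewrite inE xl2 orbT.
  by move=> y; rewrite inE => /orP[/eqP->|/hx].
- exists a; first exact: mem_head.
  move=> y; rewrite inE => /orP[/eqP->//|/hx H]; exact: (le_trans H (ltW h)).
Qed.

Lemma witness0 S : witness c A 0 S (set0, finset.set0).
Proof.
split; first exact: piece0.
split; last by rewrite /bsize /= len0 cards0 addr0.
move=> i _; split => //=; apply/fintype.subsetP => ?; by rewrite inE.
Qed.

Lemma coh_ne t S : 0 < t -> cohesive c alpha A t S -> S != finset.set0.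
Proof.
move=> t0 [c1 _]; rewrite -card_gt0 -(ltr0n R); apply: lt_le_trans c1.
by apply: divr_gt0 => //; apply: mulr_gt0 => //; rewrite ltr0n.
Qed.

Lemma well_def k st : steps c alpha A k st -> st.1 != finset.set0 ->
  exists st', greedy_step c alpha A st st'.
Proof.
move=> _ hne.
pose T (S : {set 'I_n}) := #|S|%:R * alpha / n%:R.
have T0 S : 0 <= T S by rewrite /T divr_ge0 // ?mulr_ge0 ?ler0n // ltW.
have Hb : forall S : {set 'I_n}, exists p : R * bundle R m,
    [/\ witness c A p.1 S p.2, p.1 <= T S, p.1 <= bsize (common c A S) &
        forall t' B', witness c A t' S B' -> t' <= T S -> t' <= p.1].
  by move=> S; have [t [B [h1 h2 h3 h4 _]]] := best S (T S) (T0 S); exists (t, B).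
pose f S := projT1 (cid (Hb S)).
have fP : forall S, [/\ witness c A (f S).1 S (f S).2, (f S).1 <= T S,
    (f S).1 <= bsize (common c A S) &
    forall t' B', witness c A t' S B' -> t' <= T S -> t' <= (f S).1].
  move=> S; exact: (projT2 (cid (Hb S))).
set N := st.1.
pose cand := [seq S : {set 'I_n} <- enum (finset.setT : {set {set 'I_n}}) | (S \subset N) && (S != finset.set0)].
have /set0Pn [j jN] := hne.
have c0 : [set j]%SET \in cand.
  rewrite mem_filter mem_enum finset.in_setT andbT finset.sub1set jN /=.
  by apply/set0Pn; exists j; rewrite inE.
have [S sc hS] := @seq_max _ cand (fun S => (f S).1) _ c0.
move: (sc); rewrite mem_filter => /andP[/andP[SN Sne] _].
have [w1 w2 w3 w4] := fP S.
exists (st.1 :\: S, bunion st.2 (f S).2), (f S).1, S, (f S).2; split; last split => //.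
- split; first by apply: (w4 0 _ (witness0 S)).
  split => //; split => //; split => //; split => //.
  by rewrite coh_iff.
- move=> t' S' B' [t'0 [S'N [S'ne [[ch1 ch2] wt]]]].
  have S'c : S' \in cand by rewrite mem_filter mem_enum finset.in_setT andbT S'N S'ne.
  apply: le_trans (hS S' S'c).
  have [_ _ _ w4'] := fP S'.
  by apply: (w4' t' B' wt); rewrite -coh_iff.
Qed.

Lemma term k st : steps c alpha A k st -> (k <= n)%N.
Proof. by move/(@Inv_steps k st) => [hk _ _ _]; move: hk; lia. Qed.

Lemma ejr1 W : EJR_M c alpha A W -> EJR_1 c alpha A W.
Proof.
move=> hM t S t0 [c1 c2].
have Sne := coh_ne t S t0 (conj c1 c2).
have /set0Pn [j jS] := Sne.
case: (ltrP t 1) => t1.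
  exists j => //; apply: lt_le_trans (util_ge0 _ _); lra.
have [t' [B [w h1 h2 _ h4]]] := best S t (ltW t0).
have h4' := h4 c2.
have t'0 : 0 < t' by lra.
have coh' : cohesive c alpha A t' S.
  split => //; apply: le_trans c1.
  apply: ler_wpM2r; first by rewrite invr_ge0 ltW.
  by apply: ler_wpM2r => //; rewrite ler0n.
have [j' jS' hj] := hM t' S t'0 coh' (ex_intro _ B w).
exists j' => //; lra.
Qed.

Lemma correct k W : steps c alpha A k (finset.set0, W) ->
  allocation c alpha W /\ EJR_M c alpha A W /\ EJR_1 c alpha A W.
Proof.
move=> hst; have [_ pW hs hE] := @Inv_steps k _ hst; cbn [fst snd] in *.
have EM : EJR_M c alpha A W.
  move=> t S t0 coh wB; apply: (hE t S t0 coh wB).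
  by rewrite finset.subset0; apply: (coh_ne t S t0 coh).
split; last by split => //; exact: ejr1.
split => //.
have n0 : 0 < n%:R :> R by rewrite ltr0n.
by rewrite -(ler_pM2r n0); move: hs; rewrite cards0 subn0.
Qed.

Lemma exists_run : exists W, allocation c alpha W /\ EJR_M c alpha A W.
Proof.
have H : forall j, exists k st, steps c alpha A k st /\ (st.1 = finset.set0 \/ (j <= k)%N).
  elim => [|j [k [st [hs [e|jk]]]]].
  - by exists 0%N, (init_state R n m); split; [constructor|right].
  - by exists k, st; split => //; left.
  - case: (eqVneq st.1 finset.set0) => e; first by exists k, st; split => //; left.
    have [st' g] := @well_def k st hs e.
    exists k.+1, st'; split; [exact: stepsS hs g| right; lia].
have [k [[N W] [hs [/= e|nk]]]] := H n.+1.
- subst N; have [h1 [h2 _]] := @correct k W hs; by exists W.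
- have := @term k _ hs; lia.
Qed.

End Main.

Theorem mainTheorem5 (R : realType) (n m : nat) (c alpha : R)
    (A : 'I_n -> bundle R m)
    (hn : (0 < n)%N) (hc : 0 <= c) (hcm : 0 < Num.max c (m%:R))
    (halpha0 : 0 < alpha) (halpha1 : alpha <= c + m%:R)
    (hA : forall i, is_bundle c (A i)) :
  (* well-defined: whenever agents remain, a maximal feasible pair exists *)
  (forall k st, steps c alpha A k st -> st.1 != finset.set0 ->
     exists st', greedy_step c alpha A st st') /\
  (* termination: every run has at most n iterations *)
  (forall k st, steps c alpha A k st -> (k <= n)%N) /\
  (* correctness of every output *)
  (forall k W, steps c alpha A k (finset.set0, W) ->
     allocation c alpha W /\ EJR_M c alpha A W /\ EJR_1 c alpha A W) /\
  (* existence of an EJR-M allocation *)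
  (exists W, allocation c alpha W /\ EJR_M c alpha A W).
Proof.
split; [|split; [|split]].
- move=> k st hs hne; eapply well_def; eauto.
- move=> k st hs; eapply term; eauto.
- move=> k W hs; eapply correct; eauto.
- eapply exists_run; eauto.
Qed.
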